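(* Let $\mathfrak{U}$ be a Banach algebra. Then $\mathfrak{U}$ is symmetrically pseudo-amenable if and only if there exists a net $\{\mathbf{t}_\lambda\}_{\lambda\in\Lambda}$ in $\mathfrak{U}\widehat{\otimes}\mathfrak{U}$ such that for all $a\in\mathfrak{U}$: (i) $a\mathbf{t}_\lambda-\mathbf{t}_\lambda a\to 0$; (ii) $\pi(\mathbf{t}_\lambda)a\to a$; (iii) $a\circ\mathbf{t}_\lambda-\mathbf{t}_\lambda\circ a\to 0$; (iv) $a\,\pi^{\circ}(\mathbf{t}_\lambda)\to a$.
   Context: For a Banach algebra $\mathfrak{U}$, $\mathfrak{U}\widehat{\otimes}\mathfrak{U}$ is the projective tensor product, with the operations (defined on elementary tensors and extended linearly and continuously) $a(b\otimes c)=ab\otimes c$, $(b\otimes c)a=b\otimes ca$, $a\circ(b\otimes c)=b\otimes ac$, $(b\otimes c)\circ a=ba\otimes c$, and the bounded linear maps $\pi,\pi^\circ:\mathfrak{U}\widehat{\otimes}\mathfrak{U}\to\mathfrak{U}$ given by $\pi(b\otimes c)=bc$, $\pi^{\circ}(b\otimes c)=cb$. The flip map is $(b\otimes c)^{\circ}=c\otimes b$; an element $\mathbf{t}$ is symmetric if $\mathbf{t}^\circ=\mathbf{t}$. An approximate diagonal for $\mathfrak{U}$ is a net $\{\mathbf{t}_\lambda\}$ in $\mathfrak{U}\widehat{\otimes}\mathfrak{U}$ (not necessarily bounded) with $a\mathbf{t}_\lambda-\mathbf{t}_\lambda a\to0$ and $\pi(\mathbf{t}_\lambda)a\to a$ for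 all $a\in\mathfrak{U}$. $\mathfrak{U}$ is called symmetrically pseudo-amenable if it has an approximate diagonal consisting of symmetric elements. *)

(* Defs.v *)
From HB Require Import structures.
From mathcomp Require Import all_boot all_order all_algebra.
From mathcomp Require Import all_classical all_reals all_analysis.
Set Implicit Arguments. Unset Strict Implicit. Unset Printing Implicit Defensive.
Import Order.TTheory GRing.Theory Num.Theory.
Import numFieldNormedType.Exports.
Local Open Scope ring_scope.

(* Scalar field: any numFieldType K (covers the complex numbers). *)

Definition lin (K : numFieldType) (V E : completeNormedModType K) (f : V -> E) : Prop :=
  forall (k : K) (x y : V), f (k *: x + y) = k *: f x + f y.

Definition bilin (K : numFieldType) (V E : completeNormedModType K)
  (phi : V -> V -> E) : Prop :=
  (forall a, lin (phi a)) /\ (forall b, lin (fun a => phi a b)).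

Record is_banach_algebra (K : numFieldType) (U : completeNormedModType K)
  (mul : U -> U -> U) : Prop := {
  ba_bilin : bilin mul;
  ba_assoc : forall a b c, mul a (mul b c) = mul (mul a b) c;
  ba_submult : forall a b, `|mul a b| <= `|a| * `|b| }.

(* (W, tens) is the projective tensor product U ⊗^ U, characterised (up to
   isometric isomorphism) by its universal property: every bounded bilinear
   map phi : U x U -> E into a Banach space extends uniquely to a bounded
   linear map L : W -> E with L (a ⊗ b) = phi a b and ||L|| = ||phi||. *)
Record is_proj_tensor (K : numFieldType) (U W : completeNormedModType K)
  (tens : U -> U -> W) : Prop := {
  pt_bilin : bilin tens;
  pt_bound : forall a b, `|tens a b| <= `|a| * `|b|;
  pt_ext : forall (E : completeNormedModType K) (phi : U -> U -> E),
    bilin phi ->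
    (exists C : K, forall a b, `|phi a b| <= C * `|a| * `|b|) ->
    exists L : W -> E,
      [/\ lin L, continuous L,
          (forall a b, L (tens a b) = phi a b) &
          (forall M : K, 0 <= M ->
             ((forall w, `|L w| <= M * `|w|) <->
              (forall a b, `|phi a b| <= M * `|a| * `|b|)))];
  pt_uniq : forall (E : completeNormedModType K) (L1 L2 : W -> E),
    lin L1 -> continuous L1 -> lin L2 -> continuous L2 ->
    (forall a b, L1 (tens a b) = L2 (tens a b)) -> L1 = L2 }.

(* The operations on U ⊗^ U, each the (unique) bounded linear map
   determined by its values on elementary tensors:
     lm a t = a t,   rm a t = t a,   lc a t = a ∘ t,   rc a t = t ∘ a,
     pi, pio = π, π°,  flip t = t°.  *)
Record tensor_ops (K : numFieldType) (U W : completeNormedModType K)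
  (mul : U -> U -> U) (tens : U -> U -> W)
  (lm rm lc rc : U -> W -> W) (pi pio : W -> U) (flip : W -> W) : Prop := {
  op_lm : forall a, [/\ lin (lm a), continuous (lm a) &
            forall b c, lm a (tens b c) = tens (mul a b) c];
  op_rm : forall a, [/\ lin (rm a), continuous (rm a) &
            forall b c, rm a (tens b c) = tens b (mul c a)];
  op_lc : forall a, [/\ lin (lc a), continuous (lc a) &
            forall b c, lc a (tens b c) = tens b (mul a c)];
  op_rc : forall a, [/\ lin (rc a), continuous (rc a) &
            forall b c, rc a (tens b c) = tens (mul b a) c];
  op_pi : [/\ lin pi, continuous pi & forall b c, pi (tens b c) = mul b c];
  op_pio : [/\ lin pio, continuous pio & forall b c, pio (tens b c) = mul c b];
  op_flip : [/\ lin flip, continuous flip & forall b c, flip (tens b c) = tens c b] }.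

Record directed (L : Type) (le : L -> L -> Prop) : Prop := {
  dir_refl : forall i, le i i;
  dir_trans : forall i j k, le i j -> le j k -> le i k;
  dir_ub : forall i j, exists k, le i k /\ le j k;
  dir_nonempty : exists i : L, True }.

Definition net_cvg (K : numFieldType) (V : completeNormedModType K)
  (L : Type) (le : L -> L -> Prop) (x : L -> V) (l : V) : Prop :=
  forall e : K, 0 < e -> exists i0, forall i, le i0 i -> `|x i - l| < e.

(* Approximate diagonal (not necessarily bounded) *)
Definition approx_diagonal (K : numFieldType) (U W : completeNormedModType K)
  (mul : U -> U -> U) (lm rm : U -> W -> W) (pi : W -> U)
  (L : Type) (le : L -> L -> Prop) (t : L -> W) : Prop :=
  directed le /\
  forall a : U, net_cvg le (fun i => lm a (t i) - rm a (t i)) 0 /\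
                net_cvg le (fun i => mul (pi (t i)) a) a.

Definition sym_pseudo_amenable (K : numFieldType) (U W : completeNormedModType K)
  (mul : U -> U -> U) (lm rm : U -> W -> W) (pi : W -> U) (flip : W -> W) : Prop :=
  exists (L : Type) (le : L -> L -> Prop) (t : L -> W),
    approx_diagonal mul lm rm pi le t /\ (forall i, flip (t i) = t i).

(* Main.v *)
Require Import Defs.
From HB Require Import structures.
From mathcomp Require Import all_boot all_order all_algebra.
From mathcomp Require Import all_classical all_reals all_analysis.
Import Order.TTheory GRing.Theory Num.Theory.
Import numFieldNormedType.Exports.
Local Open Scope ring_scope.

Section Helpers.
Context {K : numFieldType}.

Lemma linD {V E : completeNormedModType K} {f : V -> E} : lin f ->
  forall x y, f (x + y) = f x + f y.
Proof. move=> H x y; have := H 1 x y; by rewrite !scale1r. Qed.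

Lemma lin0 {V E : completeNormedModType K} {f : V -> E} : lin f -> f 0 = 0.
Proof. move=> H; have := linD H 0 0; rewrite addr0 => /eqP. by rewrite -subr_eq0 opprD addrA subrr sub0r oppr_eq0 => /eqP. Qed.


Lemma linZ {V E : completeNormedModType K} {f : V -> E} : lin f ->
  forall k x, f (k *: x) = k *: f x.
Proof. by move=> H k x; rewrite -[k *: x]addr0 H lin0 // addr0. Qed.

Lemma linB {V E : completeNormedModType K} {f : V -> E} : lin f ->
  forall x y, f (x - y) = f x - f y.
Proof. by move=> H x y; rewrite linD // -scaleN1r linZ // scaleN1r. Qed.

Lemma lin_comp {V E F : completeNormedModType K} (f : E -> F) (g : V -> E) :
  lin f -> lin g -> lin (f \o g).
Proof. by move=> Hf Hg k x y /=; rewrite Hg Hf. Qed.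

Lemma cont_comp {V E F : completeNormedModType K} (f : E -> F) (g : V -> E) :
  continuous f -> continuous g -> continuous (f \o g).
Proof. by move=> Hf Hg x; exact: (continuous_comp (Hg x) (Hf (g x))). Qed.

Lemma lin_bdd_cont {V E : completeNormedModType K} (f : V -> E) (C : K) :
  0 <= C -> lin f -> (forall x, `|f x| <= C * `|x|) -> continuous f.
Proof.
move=> C0 Hl Hb x; apply/cvgrPdist_lt => e e0.
have C1 : 0 < C + 1 by rewrite ltr_wpDl.
apply/nbhs_normP; exists (e / (C + 1)); first exact: divr_gt0.
move=> y /=; rewrite -linB // => hy.
apply: (le_lt_trans (Hb _)).
have : C * `|x - y| <= C * (e / (C + 1)).
  by apply: ler_wpM2l => //; apply: ltW.
move/le_lt_trans; apply.
rewrite mulrA ltr_pdivrMr // mulrC ltr_pM2l //.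
by rewrite ltrDl.
Qed.

Lemma net_lin0 {V E : completeNormedModType K} {f : V -> E} {L : Type}
  {le : L -> L -> Prop} {x : L -> V} :
  lin f -> continuous f -> net_cvg le x 0 -> net_cvg le (fun i => f (x i)) 0.
Proof.
move=> Hl Hc Hx e e0.
have := Hc 0 => /cvgrPdist_lt /(_ e e0) /nbhs_normP [d d0 Hd].
have [i0 Hi0] := Hx d d0; exists i0 => i /Hi0; rewrite subr0 => h.
have := Hd (x i); rewrite /= sub0r normrN => /(_ h).
by rewrite lin0 // sub0r normrN subr0.
Qed.

Lemma net_add {V : completeNormedModType K} {L : Type} {le : L -> L -> Prop}
  {x y : L -> V} {l m} : directed le ->
  net_cvg le x l -> net_cvg le y m -> net_cvg le (fun i => x i + y i) (l + m).
Proof.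
move=> D Hx Hy e e0.
have e2 : 0 < e / 2 by rewrite divr_gt0.
have [i1 H1] := Hx _ e2; have [i2 H2] := Hy _ e2.
have [k [k1 k2]] := dir_ub D i1 i2.
exists k => i ki.
have := H1 i (dir_trans D k1 ki); have := H2 i (dir_trans D k2 ki) => h2 h1.
rewrite opprD addrACA; apply: (le_lt_trans (ler_normD _ _)).
by rewrite (splitr e) ltrD.
Qed.

Lemma net_scale {V : completeNormedModType K} {L : Type} {le : L -> L -> Prop}
  {x : L -> V} {l} (k : K) :
  net_cvg le x l -> net_cvg le (fun i => k *: x i) (k *: l).
Proof.
move=> Hx e e0.
have C1 : 0 < `|k| + 1 by rewrite ltr_wpDl.
have [i0 H] := Hx (e / (`|k| + 1)) (divr_gt0 e0 C1).
exists i0 => i /H h; rewrite -scalerBr normrZ.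
have : `|k| * `|x i - l| <= `|k| * (e / (`|k| + 1)).
  by apply: ler_wpM2l => //; apply: ltW.
move/le_lt_trans; apply.
rewrite mulrA ltr_pdivrMr // mulrC ltr_pM2l //.
by rewrite ltrDl.
Qed.

Lemma net_ext {V : completeNormedModType K} {L : Type} {le : L -> L -> Prop}
  {x y : L -> V} {l m} : (forall i, x i = y i) -> l = m ->
  net_cvg le x l -> net_cvg le y m.
Proof. by move=> H <- Hx e e0; have [i0 Hi] := Hx e e0; exists i0 => i; rewrite -H; apply: Hi. Qed.

Lemma net_sub0 {V : completeNormedModType K} {L : Type} {le : L -> L -> Prop}
  {x y : L -> V} {l} : directed le ->
  net_cvg le x l -> net_cvg le y 0 -> net_cvg le (fun i => x i - y i) l.
Proof.
move=> D Hx Hy.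
have := net_add D Hx (net_scale (-1) Hy).
by apply: net_ext => [i|]; rewrite scaleN1r // oppr0 addr0.
Qed.

End Helpers.

Theorem proposition3p2 (K : numFieldType) (U W : completeNormedModType K)
  (mul : U -> U -> U) (tens : U -> U -> W)
  (lm rm lc rc : U -> W -> W) (pi pio : W -> U) (flip : W -> W) :
  is_banach_algebra mul ->
  is_proj_tensor tens ->
  tensor_ops mul tens lm rm lc rc pi pio flip ->
  (sym_pseudo_amenable mul lm rm pi flip <->
   exists (L : Type) (le : L -> L -> Prop) (t : L -> W),
     directed le /\
     forall a : U,
       [/\ net_cvg le (fun i => lm a (t i) - rm a (t i)) 0,
           net_cvg le (fun i => mul (pi (t i)) a) a,
           net_cvg le (fun i => lc a (t i) - rc a (t i)) 0 &
           net_cvg le (fun i => mul a (pio (t i))) a]).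
Proof.
move=> BA PT OPS.
have lmL a : lin (lm a) by case: (op_lm OPS a).
have lmC a : continuous (lm a) by case: (op_lm OPS a).
have lmT a b c : lm a (tens b c) = tens (mul a b) c by case: (op_lm OPS a).
have rmL a : lin (rm a) by case: (op_rm OPS a).
have rmC a : continuous (rm a) by case: (op_rm OPS a).
have rmT a b c : rm a (tens b c) = tens b (mul c a) by case: (op_rm OPS a).
have lcL a : lin (lc a) by case: (op_lc OPS a).
have lcC a : continuous (lc a) by case: (op_lc OPS a).
have lcT a b c : lc a (tens b c) = tens b (mul a c) by case: (op_lc OPS a).
have rcL a : lin (rc a) by case: (op_rc OPS a).
have rcC a : continuous (rc a) by case: (op_rc OPS a).
have rcT a b c : rc a (tens b c) = tens (mul b a) c by case: (op_rc OPS a).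
have [piL piC piT] := op_pi OPS.
have [pioL pioC pioT] := op_pio OPS.
have [flL flC flT] := op_flip OPS.
have mulL a : lin (mul a) by case: (ba_bilin BA).
have mulR a : lin (fun x => mul x a) by case: (ba_bilin BA).
have mulLC a : continuous (mul a).
  have hb : forall x, `|mul a x| <= `|a| * `|x| by move=> x; exact: ba_submult.
  exact: (lin_bdd_cont _ _ (normr_ge0 a) (mulL a) hb).
have mulRC a : continuous (fun x => mul x a).
  apply: (lin_bdd_cont _ _ (normr_ge0 a) (mulR a)) => x; rewrite mulrC; exact: ba_submult.
have eqf (E : completeNormedModType K) (L1 L2 : W -> E) :
    lin L1 -> continuous L1 -> lin L2 -> continuous L2 ->
    (forall b c, L1 (tens b c) = L2 (tens b c)) -> forall w, L1 w = L2 w.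
  by move=> l1 c1 l2 c2 h w; rewrite (pt_uniq PT l1 c1 l2 c2 h).
have E1 a w : flip (lm a w) = lc a (flip w).
  apply: (eqf _ (flip \o lm a) (lc a \o flip));
    (try exact: lin_comp); (try exact: cont_comp); try done; move=> b c /=.
  by rewrite lmT !flT lcT.
have E2 a w : flip (rm a w) = rc a (flip w).
  apply: (eqf _ (flip \o rm a) (rc a \o flip));
    (try exact: lin_comp); (try exact: cont_comp); try done; move=> b c /=.
  by rewrite rmT !flT rcT.
have E1' a w : flip (lc a w) = lm a (flip w).
  apply: (eqf _ (flip \o lc a) (lm a \o flip));
    (try exact: lin_comp); (try exact: cont_comp); try done; move=> b c /=.
  by rewrite lcT !flT lmT.
have E2' a w : flip (rc a w) = rm a (flip w).
  apply: (eqf _ (flip \o rc a) (rm a \o flip));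
    (try exact: lin_comp); (try exact: cont_comp); try done; move=> b c /=.
  by rewrite rcT !flT rmT.
have E3 w : pio w = pi (flip w).
  apply: (eqf _ pio (pi \o flip)); (try exact: lin_comp); (try exact: cont_comp); try done; move=> b c /=.
  by rewrite pioT flT piT.
have E6 a w : pio (lc a w) = mul a (pio w).
  apply: (eqf _ (pio \o lc a) (mul a \o pio));
    (try exact: lin_comp); (try exact: cont_comp); try done; move=> b c /=.
  by rewrite lcT !pioT (ba_assoc BA).
have E7 a w : pio (rc a w) = mul (pio w) a.
  apply: (eqf _ (pio \o rc a) ((fun x => mul x a) \o pio));
    (try exact: lin_comp); (try exact: cont_comp); try done; move=> b c /=.
  by rewrite rcT !pioT (ba_assoc BA).
have E4 a w : pi (lm a w) = mul a (pi w).
  apply: (eqf _ (pi \o lm a) (mul a \o pi));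
    (try exact: lin_comp); (try exact: cont_comp); try done; move=> b c /=.
  by rewrite lmT !piT (ba_assoc BA).
have E5 a w : pi (rm a w) = mul (pi w) a.
  apply: (eqf _ (pi \o rm a) ((fun x => mul x a) \o pi));
    (try exact: lin_comp); (try exact: cont_comp); try done; move=> b c /=.
  by rewrite rmT !piT (ba_assoc BA).
have E8 w : flip (flip w) = w.
  apply: (eqf _ (flip \o flip) id); (try exact: lin_comp); (try exact: cont_comp); try done.
    have hl : lin (@id W) by [].
    apply: (@lin_bdd_cont K W W id 1 ler01 hl) => x; rewrite mul1r //.
  move=> b c /=.
  by rewrite !flT.
split.
- move=> [L [le [t [[D H] Hs]]]]; exists L, le, t; split=> // a.
  have [H1 H2] := H a; split => //.
  + apply: (net_ext _ _ (net_lin0 flL flC H1)) => // i.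
    by rewrite (linB flL) E1 E2 Hs.
  + have := net_add D (net_lin0 piL piC H1) H2.
    apply: net_ext => [i|]; last by rewrite add0r.
    by rewrite (linB piL) E4 E5 subrK E3 Hs.
- move=> [L [le [t [D H]]]].
  exists L, le, (fun i => 2^-1 *: (t i + flip (t i))); split; last first.
    by move=> i; rewrite (linZ flL) (linD flL) E8 addrC.
  split=> // a; have [H1 H2 H3 H4] := H a; split.
  + have := net_scale (2^-1) (net_add D H1 (net_lin0 flL flC H3)).
    apply: net_ext => [i|]; last by rewrite addr0 scaler0.
    rewrite (linZ (lmL a)) (linZ (rmL a)) (linD (lmL a)) (linD (rmL a)).
    rewrite (linB flL) E1' E2' -scalerBr; congr (_ *: _).
    by rewrite opprD addrACA.
  + have H4' : net_cvg le (fun i => mul a (pio (t i)) - pio (lc a (t i) - rc a (t i))) a.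
      exact: (net_sub0 D H4 (net_lin0 pioL pioC H3)).
    have := net_scale (2^-1) (net_add D H2 H4').
    apply: net_ext => [i|].
      rewrite (linZ piL) (linZ (mulR a)) (linD piL) (linD (mulR a)).
      rewrite (linB pioL) E6 E7 -E3.
      by congr (_ *: (_ + _)); rewrite opprB addrC subrK.
    have two : (2 : K) != 0 by rewrite pnatr_eq0.
    by rewrite -{1 2}[a]scale1r -scalerDl scalerA -[1 + 1]/(2%:R : K) mulVf // scale1r.
Qed.
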